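(* Let $M$ be a $4$-dimensional manifold with local coordinates $(x^1,\dots,x^4)$, $e_i=\partial/\partial x^i$, and Riemannian metric $g$ with components \[(g_{ij})=\begin{pmatrix} A&B&C&B\\ B&A&B&C\\ C&B&A&B\\ B&C&B&A\end{pmatrix},\] $A,B,C$ smooth functions with $A>C>B>0$. Let $P$ be the almost product structure with component matrix having rows $(0,0,1,0),(0,0,0,1),(1,0,0,0),(0,1,0,0)$. Then $(M,g,P)$ belongs to the class $\mathcal{W}_0$, i.e. $F(x,y,z)=g((\nabla_xP)y,z)=0$ identically (equivalently $\nabla P=0$, $\nabla$ the Levi-Civita connection of $g$), if and only if \[A_3=C_1,\quad A_1=C_3,\quad B_3=B_1,\quad B_4=B_2,\quad A_2=C_4,\quad A_4=C_2,\] where $A_i=\partial A/\partial x^i$, $B_i=\partial B/\partial x^i$, $C_i=\partial C/\partial x^i$. *)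

(* Defs.v *)
From HB Require Import structures.
From mathcomp Require Import all_boot all_order all_algebra.
From mathcomp Require Import all_classical all_reals all_analysis.
Set Implicit Arguments. Unset Strict Implicit. Unset Printing Implicit Defensive.
Import Order.TTheory GRing.Theory Num.Theory.
Import numFieldNormedType.Exports.
Local Open Scope ring_scope.

(* Points of the coordinate chart are row vectors p = (x^1,...,x^4),
   indices 0..3 stand for 1..4. *)

Definition ix1 : 'I_4 := inord 0.
Definition ix2 : 'I_4 := inord 1.
Definition ix3 : 'I_4 := inord 2.
Definition ix4 : 'I_4 := inord 3.

Section Defs.
Variable R : realType.
Notation pt := 'rV[R]_4.

Definition ecoord (i : 'I_4) : pt := delta_mx 0 i.

Definition pderiv (f : pt -> R) (i : 'I_4) (p : pt) : R := derive f p (ecoord i).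

Definition gmat (A B C : pt -> R) (p : pt) : 'M[R]_4 :=
  \matrix_(i < 4, j < 4)
    (let d := (((j : nat) + 4 - (i : nat)) %% 4)%N in
     if d == 0%N then A p else if d == 2%N then C p else B p).

(* the almost product structure P: P e_1 = e_3, P e_2 = e_4, P e_3 = e_1, P e_4 = e_2;
   Pmat j k = k-th component of P e_j *)
Definition Pmat : 'M[R]_4 :=
  \matrix_(j < 4, k < 4) (if (((j : nat) + 2) %% 4 == (k : nat))%N then 1 else 0).

(* Christoffel symbols of the first kind  Gamma_{ij,l} = g(nabla_{e_i} e_j, e_l) *)
Definition christ1 (g : pt -> 'M[R]_4) (p : pt) (i j l : 'I_4) : R :=
  2^-1 * (pderiv (fun q => g q j l) i p + pderiv (fun q => g q i l) j p
          - pderiv (fun q => g q i j) l p).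

Definition christ2 (g : pt -> 'M[R]_4) (p : pt) (k i j : 'I_4) : R :=
  \sum_(l < 4) invmx (g p) k l * christ1 g p i j l.

(* components of the covariant derivative of the (1,1)-tensor P (constant
   component matrix): (nabla_{e_i} P) e_j = sum_k nablaP p i j k e_k *)
Definition nablaP (g : pt -> 'M[R]_4) (P : 'M[R]_4) (p : pt) (i j k : 'I_4) : R :=
  \sum_(s < 4) christ2 g p k i s * P j s - \sum_(s < 4) christ2 g p s i j * P s k.

Definition Ftensor (g : pt -> 'M[R]_4) (P : 'M[R]_4) (p : pt) (x y z : pt) : R :=
  \sum_(i < 4) \sum_(j < 4) \sum_(k < 4) \sum_(l < 4)
    x 0 i * y 0 j * z 0 l * nablaP g P p i j k * g p k l.

Definition inW0 (U : set pt) (g : pt -> 'M[R]_4) (P : 'M[R]_4) : Prop :=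
  forall p, U p -> forall x y z : pt, Ftensor g P p x y z = 0.

End Defs.

(* Main.v *)
Require Import Defs.
From HB Require Import structures.
From mathcomp Require Import all_boot all_order all_algebra.
From mathcomp Require Import all_classical all_reals all_analysis.
From mathcomp Require Import ring lra.
Import Order.TTheory GRing.Theory Num.Theory.
Import numFieldNormedType.Exports.
Local Open Scope ring_scope.
Lemma ixv1 : (ix1 : nat) = 0%N. Proof. by rewrite /ix1 inordK. Qed.
Lemma ixv2 : (ix2 : nat) = 1%N. Proof. by rewrite /ix2 inordK. Qed.
Lemma ixv3 : (ix3 : nat) = 2%N. Proof. by rewrite /ix3 inordK. Qed.
Lemma ixv4 : (ix4 : nat) = 3%N. Proof. by rewrite /ix4 inordK. Qed.
Definition ixv := (ixv1, ixv2, ixv3, ixv4).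
Lemma ord4_cases (i : 'I_4) : i = ix1 \/ i = ix2 \/ i = ix3 \/ i = ix4.
Proof.
case: i => [[|[|[|[|n]]]] Hn] //; [left|right;left|right;right;left|right;right;right];
  apply: val_inj; by rewrite /= ?ixv.
Qed.
Lemma sum4 (R : realType) (F : 'I_4 -> R) : \sum_(k < 4) F k = F ix1 + F ix2 + F ix3 + F ix4.
Proof.
rewrite !big_ord_recr big_ord0 /= add0r.
by congr (_ + _ + _ + _); congr F; apply: val_inj; rewrite /= ?ixv.
Qed.

Section S.
Variable R : realType.
Notation pt := 'rV[R]_4.

Lemma sumdelta (i : 'I_4) (F : 'I_4 -> R) : \sum_(k < 4) ecoord R i 0 k * F k = F i.
Proof.
rewrite (bigD1 i) //= big1 => [|k /negbTE nk]; last by rewrite /ecoord mxE nk andbF mul0r.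
by rewrite /ecoord mxE !eqxx /= mul1r addr0.
Qed.

Definition Phi (g : pt -> 'M[R]_4) (P : 'M[R]_4) (p : pt) (i j l : 'I_4) : R :=
  \sum_(k < 4) nablaP g P p i j k * g p k l.

Lemma Fform g P p x y z : Ftensor g P p x y z =
  \sum_(i < 4) x 0 i * \sum_(j < 4) y 0 j * \sum_(l < 4) z 0 l * Phi g P p i j l.
Proof.
rewrite /Ftensor; apply: eq_bigr => i _; rewrite mulr_sumr; apply: eq_bigr => j _.
rewrite exchange_big /= !mulr_sumr; apply: eq_bigr => l _.
rewrite /Phi !mulr_sumr; apply: eq_bigr => k _; by rewrite !mulrA.
Qed.

Lemma L1 (g : pt -> 'M[R]_4) p i s l :
  (g p)^T = g p -> g p *m invmx (g p) = 1%:M ->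
  \sum_(k < 4) christ2 g p k i s * g p k l = christ1 g p i s l.
Proof.
move=> Hs Hi; rewrite /christ2.
under eq_bigr do rewrite mulr_suml.
rewrite exchange_big /=.
transitivity (\sum_(m < 4) christ1 g p i s m * (1%:M : 'M[R]_4) l m).
  apply: eq_bigr => m _; rewrite -Hi mxE mulr_sumr; apply: eq_bigr => k _.
  have E : g p k l = g p l k by rewrite -{1}Hs mxE.
  by rewrite E; ring.
rewrite (bigD1 l) //= big1 => [|m /negbTE nm]; last by rewrite mxE eq_sym nm mulr0.
by rewrite mxE eqxx mulr1 addr0.
Qed.

Lemma PhiE (g : pt -> 'M[R]_4) P p i j l :
  (g p)^T = g p -> g p *m invmx (g p) = 1%:M -> P *m g p = g p *m P ->
  Phi g P p i j l = \sum_(s < 4) P j s * christ1 g p i s l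
                   - \sum_(m < 4) christ1 g p i j m * P m l.
Proof.
move=> Hs Hi HP; rewrite /Phi /nablaP.
under eq_bigr do rewrite mulrBl.
rewrite sumrB; congr (_ - _).
  under eq_bigr do rewrite mulr_suml.
  rewrite exchange_big /=; apply: eq_bigr => s _.
  rewrite -(@L1 g p i s l Hs Hi) mulr_sumr; apply: eq_bigr => k _; ring.
under eq_bigr do rewrite mulr_suml.
rewrite exchange_big /=.
transitivity (\sum_(s < 4) christ2 g p s i j * (g p *m P) s l).
  apply: eq_bigr => s _; rewrite -HP mxE mulr_sumr; apply: eq_bigr => k _; by rewrite mulrA.
transitivity (\sum_(s < 4) \sum_(m < 4) christ2 g p s i j * (g p s m * P m l)).
  by apply: eq_bigr => s _; rewrite mxE mulr_sumr.
rewrite exchange_big /=; apply: eq_bigr => m _.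
rewrite -(@L1 g p i j m Hs Hi) mulr_suml; apply: eq_bigr => s _; by rewrite mulrA.
Qed.

Ltac ordcase i := case: (ord4_cases i) => ->.
Ltac ordcases i := case: (ord4_cases i) => [->|[->|[->|->]]].

Lemma gsym (A B C : pt -> R) p : (gmat A B C p)^T = gmat A B C p.
Proof.
apply/matrixP => i j; rewrite !mxE.
by ordcases i; ordcases j; rewrite !ixv.
Qed.

Lemma gPcomm (A B C : pt -> R) p : Pmat R *m gmat A B C p = gmat A B C p *m Pmat R.
Proof.
apply/matrixP => i j; rewrite !mxE !sum4 !mxE.
ordcases i; ordcases j; rewrite !ixv /=; ring.
Qed.

Lemma gunit (A B C : pt -> R) p : A p > C p -> C p > B p -> B p > 0 ->
  gmat A B C p *m invmx (gmat A B C p) = 1%:M.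
Proof.
move=> h1 h2 h3.
have l0 : A p + 2 * B p + C p != 0 by apply/negP => /eqP ?; lra.
have l1 : A p - C p != 0 by apply/negP => /eqP ?; lra.
have l2 : A p - 2 * B p + C p != 0 by apply/negP => /eqP ?; lra.
pose a' := ((A p + 2 * B p + C p)^-1 + 2 * (A p - C p)^-1 + (A p - 2 * B p + C p)^-1) / 4.
pose b' := ((A p + 2 * B p + C p)^-1 - (A p - 2 * B p + C p)^-1) / 4.
pose c' := ((A p + 2 * B p + C p)^-1 - 2 * (A p - C p)^-1 + (A p - 2 * B p + C p)^-1) / 4.
have H : gmat A B C p *m gmat (fun=> a') (fun=> b') (fun=> c') p = 1%:M.
  apply/matrixP => i j; rewrite !mxE !sum4 !mxE.
  have -> : (i == j) = (i == j :> nat) by [].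
  ordcases i; ordcases j; rewrite !ixv /= /a' /b' /c'; field; by rewrite ?l0 ?l1 ?l2.
by apply: mulmxV; case: (mulmx1_unit H).
Qed.

Lemma gfunE (A B C : pt -> R) (j l : 'I_4) : (fun q => gmat A B C q j l) =
  if (((l : nat) + 4 - (j : nat)) %% 4 == 0)%N then A
  else if (((l : nat) + 4 - (j : nat)) %% 4 == 2)%N then C else B.
Proof.
apply: funext => q; rewrite mxE /=; by case: ifP => _ //; case: ifP.
Qed.

Definition eqs6 (A B C : pt -> R) p :=
     pderiv A ix3 p = pderiv C ix1 p /\ pderiv A ix1 p = pderiv C ix3 p /\
     pderiv B ix3 p = pderiv B ix1 p /\ pderiv B ix4 p = pderiv B ix2 p /\
     pderiv A ix2 p = pderiv C ix4 p /\ pderiv A ix4 p = pderiv C ix2 p.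

Ltac simplPhi h1 h2 h3 :=
  rewrite !(PhiE _ _ _ _ _ _ (gsym _ _ _ _) (gunit _ _ _ _ h1 h2 h3) (gPcomm _ _ _ _)) !sum4 /christ1 !gfunE !mxE !ixv /=.
Ltac genD A B C p := move: (pderiv A ix1 p) (pderiv A ix2 p) (pderiv A ix3 p) (pderiv A ix4 p) (pderiv B ix1 p) (pderiv B ix2 p) (pderiv B ix3 p) (pderiv B ix4 p) (pderiv C ix1 p) (pderiv C ix2 p) (pderiv C ix3 p) (pderiv C ix4 p) => a1 a2 a3 a4 b1 b2 b3 b4 c1 c2 c3 c4.

Lemma dir1 (A B C : pt -> R) p : A p > C p -> C p > B p -> B p > 0 ->
  eqs6 A B C p -> forall i j l, Phi (gmat A B C) (Pmat R) p i j l = 0.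
Proof.
move=> h1 h2 h3 [e1 [e2 [e3 [e4 [e5 e6]]]]] i j l.
ordcases i; ordcases j; ordcases l; simplPhi h1 h2 h3; rewrite ?e1 ?e2 ?e3 ?e4 ?e5 ?e6;
  genD A B C p; ring.
Qed.

Lemma dir2 (A B C : pt -> R) p : A p > C p -> C p > B p -> B p > 0 ->
  (forall i j l, Phi (gmat A B C) (Pmat R) p i j l = 0) -> eqs6 A B C p.
Proof.
move=> h1 h2 h3 H; rewrite /eqs6.
move: (H ix1 ix1 ix1). simplPhi h1 h2 h3. move=> f1.
move: (H ix3 ix1 ix1); simplPhi h1 h2 h3; move=> f2.
move: (H ix2 ix1 ix1); simplPhi h1 h2 h3; move=> f3.
move: (H ix1 ix2 ix2); simplPhi h1 h2 h3; move=> f4.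
move: (H ix4 ix2 ix2); simplPhi h1 h2 h3; move=> f5.
move: (H ix2 ix2 ix2); simplPhi h1 h2 h3; move=> f6.
clear H h1 h2 h3; move: f1 f2 f3 f4 f5 f6. genD A B C p.
move=> *; split; [lra|split; [lra|split; [lra|split; [lra|split; lra]]]].
Qed.
End S.

Theorem theorem3p4 (R : realType) (U : set 'rV[R]_4) (A B C : 'rV[R]_4 -> R) :
  open U ->
  (forall p, U p -> differentiable A p /\ differentiable B p /\ differentiable C p) ->
  (forall p, U p -> A p > C p /\ C p > B p /\ B p > 0) ->
  inW0 U (gmat A B C) (Pmat R) <->
  (forall p, U p ->
     pderiv A ix3 p = pderiv C ix1 p /\ pderiv A ix1 p = pderiv C ix3 p /\
     pderiv B ix3 p = pderiv B ix1 p /\ pderiv B ix4 p = pderiv B ix2 p /\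
     pderiv A ix2 p = pderiv C ix4 p /\ pderiv A ix4 p = pderiv C ix2 p).
Proof.
move=> _ _ Hpos; split.
- move=> HW p Up; have [h1 [h2 h3]] := Hpos p Up.
  apply: (@dir2 R A B C p h1 h2 h3) => i j l.
  have := HW p Up (ecoord R i) (ecoord R j) (ecoord R l).
  by rewrite Fform !sumdelta.
- move=> HE p Up x y z; have [h1 [h2 h3]] := Hpos p Up.
  rewrite Fform big1 // => i _; rewrite big1 ?mulr0 // => j _.
  rewrite big1 ?mulr0 // => l _.
  by rewrite (@dir1 R A B C p h1 h2 h3 (HE p Up)) mulr0.
Qed.
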